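(* For every $k\ge 2$, each $t_\ell(k)$ factors as $t_\ell(k)=p_\ell(k)\,s_\ell(k)$ where $s_\ell(k)$ is the longest Nyldon proper suffix of $t_\ell(k)$, with $(p_\ell(k),s_\ell(k))$ given by: $\ell=1$: $(t_3(k-1),t_9(k-1))$; $\ell=2$: $(t_3(k-1),t_{10}(k-1))$; $\ell=3$: $(t_3(k-1),t_{12}(k-1))$; $\ell=4$: $(t_3(k-1),t_4(k-1))$; $\ell=5$: $(t_3(k-1),t_8(k-1))$; $\ell=6$: $(t_5(k),t_9(k-1))$; $\ell=7$: $(t_5(k),t_{10}(k-1))$; $\ell=8$: $(t_5(k),t_{12}(k-1))$; $\ell=9$: $(t_2(k),t_6(k))$; $\ell=10$: $(t_2(k),t_7(k))$; $\ell=11$: $(t_8(k),t_6(k))$; $\ell=12$: $(t_1(k),t_{11}(k))$.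
   Context: Strings are over the binary alphabet $\{a,b\}$ ordered by $a \prec b$, and $\prec$ also denotes the induced lexicographic order on strings: $x \prec y$ iff $x$ is a proper prefix of $y$, or there is $i$ with $x[1..i-1]=y[1..i-1]$ and $x[i]\prec y[i]$; $x\preceq y$ means $x\prec y$ or $x=y$. Nyldon words are defined recursively: every string of length $1$ is a Nyldon word; a string $w$ with $|w|\ge 2$ is a Nyldon word iff there is no factorization $w=\gamma_1\cdots\gamma_m$ with $m\ge 2$, each $\gamma_i$ a nonempty Nyldon word, and $\gamma_1\preceq\gamma_2\preceq\cdots\preceq\gamma_m$. The longest Nyldon proper suffix of $w$ is the longest proper suffix of $w$ that is a Nyldon word. For a binary string $w$, $\overline{w}$ is obtained by exchanging $a$ and $b$ letterwise, and $w'$ is $w$ with its last letter removed; $\overline{w}'$ means $(\overline{w})'$. Thue–Morse words: $\mathit{TM}_0=a$ and $\mathit{TM}_k=\mathit{TM}_{k-1}\cdot\overline{\mathit{TM}_{k-1}}$ for $k\ge1$. For $k\ge1$ put $A=\mathit{TM}_{2k}$, $B=\overline{\mathit{TM}_{2k}}$ and define $t_1(k)=b\,A\,B'$, $t_2(k)=b\,A\,B$, $t_3(k)=b\,A\,B\,B'$, $t_4(k)=b\,A$, $t_5(k)=b\,A\,\mathit{TM}_{2k-1}\,\overline{\mathit{TM}_{2k-2}}'$, $t_6(k)=b\,A\,A\,B'$, $t_7(k)=b\,A\,A\,B$, $t_8(k)=b\,A\,A\,B\,B'$, $t_9(k)=b\,A\,B\,A\,A\,B'$, $t_{10}(k)=b\,A\,B\,A\,A\,B$,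 $t_{11}(k)=b\,A\,A\,B\,B\,A\,A\,B'$, $t_{12}(k)=b\,A\,B\,A\,A\,B\,B\,A\,A\,B'$ (with $A,B$ depending on the argument). *)

(* Defs.v *)
From mathcomp Require Import all_boot.
Set Implicit Arguments. Unset Strict Implicit. Unset Printing Implicit Defensive.

(* Binary alphabet {a,b} encoded as bool: a := false, b := true, a < b. *)
Notation word := (seq bool).
Definition la : bool := false.
Definition lb : bool := true.

Fixpoint lexlt (x y : word) : bool :=
  match x, y with
  | [::], [::] => false
  | [::], _ :: _ => true
  | _ :: _, [::] => false
  | c :: x', d :: y' => (~~ c && d) || ((c == d) && lexlt x' y')
  end.
Definition lexle (x y : word) : bool := (x == y) || lexlt x y.

(* Nyldon words, by the paper's recursive definition; [nyl n w] is the
   definition applied with recursion fuel n (meaningful when size w <= n). *)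
Fixpoint nyl (n : nat) (w : word) : Prop :=
  match n with
  | 0 => False
  | n'.+1 =>
      size w = 1 \/
      (2 <= size w /\
       ~ (exists gs : seq word,
            [/\ 2 <= size gs, all (fun g => g != [::]) gs, flatten gs = w,
                (forall g, g \in gs -> nyl n' g) & sorted lexle gs]))
  end.
Definition Nyldon (w : word) : Prop := nyl (size w) w.

Definition longest_nyldon_proper_suffix (w s : word) : Prop :=
  (exists p, p != [::] /\ w = p ++ s) /\ Nyldon s /\
  (forall p' s', p' != [::] -> w = p' ++ s' -> Nyldon s' -> size s' <= size s).

Definition lnps_fact (w p s : word) : Prop :=
  w = p ++ s /\ longest_nyldon_proper_suffix w s.

Definition compl (w : word) : word := map negb w.
Definition dropl (w : word) : word := take (size w).-1 w.

Fixpoint TM (k : nat) : word :=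
  match k with 0 => [:: la] | k'.+1 => TM k' ++ compl (TM k') end.

Definition tA k := TM (2 * k).
Definition tB k := compl (TM (2 * k)).

Definition t1 k := lb :: tA k ++ dropl (tB k).
Definition t2 k := lb :: tA k ++ tB k.
Definition t3 k := lb :: tA k ++ tB k ++ dropl (tB k).
Definition t4 k := lb :: tA k.
Definition t5 k := lb :: tA k ++ TM (2 * k - 1) ++ dropl (compl (TM (2 * k - 2))).
Definition t6 k := lb :: tA k ++ tA k ++ dropl (tB k).
Definition t7 k := lb :: tA k ++ tA k ++ tB k.
Definition t8 k := lb :: tA k ++ tA k ++ tB k ++ dropl (tB k).
Definition t9 k := lb :: tA k ++ tB k ++ tA k ++ tA k ++ dropl (tB k).
Definition t10 k := lb :: tA k ++ tB k ++ tA k ++ tA k ++ tB k.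
Definition t11 k := lb :: tA k ++ tA k ++ tB k ++ tB k ++ tA k ++ tA k ++ dropl (tB k).
Definition t12 k := lb :: tA k ++ tB k ++ tA k ++ tA k ++ tB k ++ tB k ++ tA k ++ tA k ++ dropl (tB k).

(* Main.v *)
Require Import Defs.
From mathcomp Require Import all_boot.
From mathcomp Require Import zify.
Set Implicit Arguments. Unset Strict Implicit. Unset Printing Implicit Defensive.


Lemma lexlt_irr w : lexlt w w = false.
Proof. by elim: w => [|c w IH] //=; rewrite eqxx IH; case: c. Qed.

Lemma lexlt_trans x y z : lexlt x y -> lexlt y z -> lexlt x z.
Proof.
elim: x y z => [|c x IH] [|d y] [|e z] //=.
case: c; case: d; case: e => //=; eauto.
Qed.

Lemma lexlt_total x y : x != y -> lexlt x y || lexlt y x.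
Proof.
elim: x y => [|c x IH] [|d y] //=.
rewrite eqseq_cons negb_and; case: c; case: d => //= H; exact: IH.
Qed.

Lemma lexlt_asym x y : lexlt x y -> ~~ lexlt y x.
Proof. by move=> H; apply/negP=> H2; have := lexlt_trans H H2; rewrite lexlt_irr. Qed.

Lemma lexlt_cat2 u v w : lexlt (u ++ v) (u ++ w) = lexlt v w.
Proof. by elim: u => [|c u IH] //=; rewrite eqxx IH; case: c. Qed.

Lemma lexlt_cons c v w : lexlt (c :: v) (c :: w) = lexlt v w.
Proof. exact: (lexlt_cat2 [:: c]). Qed.

Lemma lexlt_pre u w : w != [::] -> lexlt u (u ++ w).
Proof. by rewrite -{1}(cats0 u) lexlt_cat2; case: w. Qed.

Lemma lexlt_catr e X y : lexlt e X -> lexlt e (X ++ y).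
Proof.
elim: e X => [|c e IH] [|d X] //= /orP[->//|/andP[-> H]].
by rewrite IH ?orbT.
Qed.

Lemma lexle_lt_trans x y z : lexlt x y -> lexle y z -> lexlt x z.
Proof. by move=> H /orP[/eqP<-//|]; apply: lexlt_trans. Qed.

Lemma nlt_le f g : ~~ lexlt f g -> lexle g f.
Proof.
move=> H; rewrite /lexle; case: eqP => //= /eqP ne.
by move: (lexlt_total ne); rewrite (negbTE H) orbF.
Qed.

Lemma le_nlt g f : lexle g f -> ~~ lexlt f g.
Proof. by case/orP=> [/eqP->|]; [rewrite lexlt_irr|exact: lexlt_asym]. Qed.

Lemma lexle_nil s : lexle [::] s.
Proof. by case: s. Qed.

Fixpoint ins (g : word) (F : seq word) : seq word :=
  match F with
  | [::] => [:: g]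
  | f :: F' => if lexlt f g then ins (g ++ f) F' else g :: F
  end.

Fixpoint fact (w : word) : seq word :=
  match w with [::] => [::] | c :: u => ins [:: c] (fact u) end.

Lemma ins_flatten g F : flatten (ins g F) = g ++ flatten F.
Proof.
elim: F g => [|f F IH] g /=; first by rewrite !cats0.
by case: ifP => _ //=; rewrite IH catA.
Qed.

Lemma fact_flatten w : flatten (fact w) = w.
Proof. by elim: w => [|c w IH] //=; rewrite ins_flatten IH. Qed.

Lemma ins_sorted g F : sorted lexle F -> sorted lexle (ins g F).
Proof.
elim: F g => [|f F IH] g //= Hs.
case: ifP => H.
  by apply: IH; apply: path_sorted Hs.
rewrite /= Hs andbT; apply: nlt_le; rewrite H //.
Qed.

Lemma fact_sorted w : sorted lexle (fact w).
Proof. by elim: w => [|c w IH] //=; apply: ins_sorted. Qed.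

Lemma ins_cat g g' F1 F2 : ins g F1 = [:: g'] -> ins g (F1 ++ F2) = ins g' F2.
Proof.
elim: F1 g => [|f F1 IH] g /=; first by case=> ->.
by case: ifP => // _; apply: IH.
Qed.

Lemma ins_split g F : exists F1 F2,
  [/\ F = F1 ++ F2, ins g F1 = [:: g ++ flatten F1] & ins g F = (g ++ flatten F1) :: F2].
Proof.
elim: F g => [|f F IH] g /=.
  by exists [::], [::]; split; rewrite //= cats0.
case: ifP => H.
  have [F1 [F2 [-> H1 H2]]] := IH (g ++ f).
  exists (f :: F1), F2; rewrite /= H H1 H2 catA; split => //.
by exists [::], (f :: F); split; rewrite //= ?H cats0.
Qed.

Lemma ins_last g E e g' : ins g (E ++ [:: e]) = [:: g'] ->
  exists g0, ins g E = [:: g0] /\ lexlt e g0.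
Proof.
elim: E g => [|f E IH] g /=.
  by case: ifP => H //; exists g.
by case: ifP => H // /IH.
Qed.

Lemma ins_last_size g F : size (last [::] F) <= size (last [::] (ins g F)).
Proof.
elim: F g => [|f F IH] g //=.
case: ifP => H //=.
case: F IH => [|f' F] IH /=; first by rewrite size_cat leq_addl.
exact: IH.
Qed.

Lemma size_flatten_pos s : all (fun g : word => g != [::]) s -> s != [::] -> 0 < size (flatten s).
Proof. by case: s => [|h s] //= /andP[]; case: h. Qed.

Lemma size_lt_flatten (g : word) gs : g \in gs -> 2 <= size gs ->
  all (fun g : word => g != [::]) gs -> size g < size (flatten gs).
Proof.
case/splitPr: gs / => s1 s2 Hs.
rewrite all_cat /= => /and3P[H1 _ H2].
rewrite flatten_cat /= !size_cat.
case: s1 Hs H1 => [|h1 s1] /= Hs H1.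
  have : s2 != [::] by move: Hs; case: (s2).
  move/(size_flatten_pos H2); lia.
have := size_flatten_pos (s:=h1::s1) H1 isT; rewrite /= !size_cat; lia.
Qed.

Definition NFP (P : word -> Prop) (w : word) gs :=
  [/\ 2 <= size gs, all (fun g => g != [::]) gs, flatten gs = w,
      (forall g, g \in gs -> P g) & sorted lexle gs].

Lemma nyl_fuel n m w : size w <= n -> size w <= m -> (nyl n w <-> nyl m w).
Proof.
elim: n m w => [|n IH] [|m] w /=.
- by [].
- by case: w => //= _ _; split=> // [[]] // [].
- by case: w => //= _ _; split=> // [[]] // [].
move=> Hn Hm.
have E : forall gs, flatten gs = w -> 2 <= size gs -> all (fun g => g != [::]) gs ->
   (forall g, g \in gs -> nyl n g) <-> (forall g, g \in gs -> nyl m g).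
  move=> gs Hf H2 Hall; split=> H g Hg; have := size_lt_flatten Hg H2 Hall; rewrite Hf => Hlt.
    by apply/(IH m g); [rewrite -ltnS (leq_trans Hlt)|rewrite -ltnS (leq_trans Hlt)|apply: H].
  by apply/(IH m g); [rewrite -ltnS (leq_trans Hlt)|rewrite -ltnS (leq_trans Hlt)|apply: H].
split=> [[H|[H2 H]]|[H|[H2 H]]]; [by left|right|by left|right]; split=> //;
  move=> [gs [Hs Ha Hf Hg Hso]]; apply: H; exists gs; split=> //; apply/(E gs) => //.
Qed.

Lemma NyldonE w : Nyldon w <->
  (size w = 1 \/ (2 <= size w /\ ~ exists gs, NFP Nyldon w gs)).
Proof.
rewrite /Nyldon; case Hw: (size w) => [|n] /=.
  by split=> // [[]] // [].
have E : forall gs, NFP (nyl n) w gs <-> NFP Nyldon w gs.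
  move=> gs; split=> [[Hs Ha Hf Hg Hso]|[Hs Ha Hf Hg Hso]]; split=> // g Hgs;
  have := size_lt_flatten Hgs Hs Ha; rewrite Hf Hw => Hlt.
    by apply: (proj2 (@nyl_fuel (size g) n g (leqnn _) _)); [rewrite -ltnS|apply: Hg].
  by apply: (proj2 (@nyl_fuel n (size g) g _ (leqnn _))); [rewrite -ltnS|apply: Hg].
rewrite Hw; split=> [[H|[H2 H]]|[H|[H2 H]]]; [by left|right|by left|right]; split=> //;
  move=> [gs Hgs]; apply: H; exists gs; apply/E => //.
Qed.

Lemma Nyldon_nonempty w : Nyldon w -> w != [::].
Proof. by case: w. Qed.

Definition NF (w : word) (F : seq word) :=
  [/\ all (fun g => g != [::]) F, flatten F = w, (forall g, g \in F -> Nyldon g) & sorted lexle F].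

Lemma NF_nil F : NF [::] F -> F = [::].
Proof. by case: F => [|h F] // [/= /andP[]]; case: h. Qed.

Lemma sorted_catl (A B : seq word) : sorted lexle A -> sorted lexle B ->
  lexle (last [::] A) (head [::] B) -> sorted lexle (A ++ B).
Proof.
case: A => [|a A] //; case: B => [|b B]; rewrite ?cats0 //= => HA HB Hl.
by rewrite cat_path HA /= Hl.
Qed.

Lemma all_Nyldon_ne (F : seq word) : (forall g, g \in F -> Nyldon g) -> all (fun g => g != [::]) F.
Proof. by move=> H; apply/allP => g /H /Nyldon_nonempty. Qed.

Lemma fact_main n : forall w, size w <= n ->
  (forall g, g \in fact w -> Nyldon g) /\ (forall F, NF w F -> F = fact w).
Proof.
elim: n => [|n IH] w Hw.
  by case: w Hw => // _; split=> // F /NF_nil.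
case: w Hw => [|c u] Hw; first by split=> // F /NF_nil.
have Hu : size u <= n by [].
have [IHA IHB] := IH u Hu.
have [F1 [F2 [EF I1 I2]]] := ins_split [:: c] (fact u).
have Hfw : fact (c :: u) = (c :: flatten F1) :: F2 by [].
have First : F2 != [::] -> Nyldon (c :: flatten F1).
  move=> HF2.
  have HNF1 : NF (flatten F1) F1.
    split=> //.
    - by apply: all_Nyldon_ne => g Hg; apply: IHA; rewrite EF mem_cat Hg.
    - by move=> g Hg; apply: IHA; rewrite EF mem_cat Hg.
    - by have := fact_sorted u; rewrite EF => /cat_sorted2 [].
  have Hsz : size (flatten F1) < size u.
    have := fact_flatten u; rewrite EF flatten_cat => Eu.
    have : 0 < size (flatten F2).
      apply: size_flatten_pos HF2; apply: all_Nyldon_ne => g Hg; apply: IHA.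
      by rewrite EF mem_cat Hg orbT.
    by rewrite -Eu size_cat; lia.
  have [IA IB] := IH (flatten F1) (leq_trans (ltnW Hsz) Hu).
  have [IA' _] := IH (c :: flatten F1) (leq_trans Hsz Hu).
  apply: IA'; rewrite /= -(IB F1 HNF1) I1.
  by rewrite mem_seq1.
have B : forall H, NF (c :: u) H -> H = fact (c :: u).
  move=> [|h1 H'] [Ha Hf Hn Hs] //.
  case: h1 Ha Hf Hn Hs => [|c' h1'] //= Ha [Ec Eu] Hn Hs. subst c'.
  case: H' Ha Eu Hn Hs => [|h2 H''] Ha Eu Hn Hs.
    rewrite cats0 in Eu; subst h1'.
    have Hny : Nyldon (c :: u) by apply: Hn; rewrite mem_seq1.
    rewrite I2; case: F2 EF I1 I2 Hfw First => [|f F2'] EF I1 I2 Hfw First.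
      by rewrite cats0 in EF; rewrite -EF fact_flatten.
    exfalso; move/NyldonE: Hny => [Hs1|[_ []]].
      by move: Hs1 => /= [] /size0nil Hu0; move: EF; rewrite Hu0 /=; case: (F1).
    exists ((c :: flatten F1) :: f :: F2'); split=> //.
    - apply: all_Nyldon_ne => g; rewrite inE => /orP[/eqP->|Hg]; first exact: First.
      by apply: IHA; rewrite EF mem_cat Hg orbT.
    - by rewrite -Hfw fact_flatten.
    - move=> g; rewrite inE => /orP[/eqP->|Hg]; first exact: First.
      by apply: IHA; rewrite EF mem_cat Hg orbT.
    - by rewrite -Hfw; apply: fact_sorted.
  set h1 := c :: h1'.
  have Hh1 : Nyldon h1 by apply: Hn; rewrite inE eqxx.
  have Hh2 : h2 != [::] by case/andP: Ha.
  have Hsz1 : size h1' < size u.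
    by rewrite -Eu size_cat /= size_cat; move: Hh2; case: h2 {Ha Hn Hs Eu} => //= *; lia.
  have [IA1 IB1] := IH h1' (leq_trans (ltnW Hsz1) Hu).
  have [_ IB2] := IH h1 (leq_trans Hsz1 Hu).
  have Fh1 : ins [:: c] (fact h1') = [:: h1].
    symmetry; apply: (IB2 [:: h1]); split=> //=; rewrite ?cats0 ?andbT //.
    by move=> g; rewrite mem_seq1 => /eqP->.
  have Hle12 : lexle h1 h2 by case/andP: Hs.
  have HNFu : NF u (fact h1' ++ h2 :: H'').
    split.
    - rewrite all_cat Ha andbT; apply: all_Nyldon_ne; exact: IA1.
    - by rewrite flatten_cat fact_flatten.
    - move=> g; rewrite mem_cat => /orP[/IA1//|Hg]; apply: Hn.
      by rewrite inE Hg orbT.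
    - apply: sorted_catl; [exact: fact_sorted|exact: path_sorted Hs|].
      rewrite /=; case/lastP E: (fact h1') => [|E' e] //=.
        by rewrite lexle_nil.
      rewrite last_rcons.
      move: Fh1; rewrite E -cats1 => Fh1.
      have [g0 [Hg0 Hlt]] := ins_last Fh1.
      have Eh1 : h1 = g0 ++ e.
        rewrite /h1.
        have H1f := ins_flatten [:: c] (E' ++ [:: e]); rewrite Fh1 /= cats0 in H1f.
        have H0f := ins_flatten [:: c] E'; rewrite Hg0 /= cats0 in H0f.
        by rewrite H1f H0f flatten_cat /= cats0.
      apply/orP; right; apply: (lexle_lt_trans _ Hle12).
      by rewrite Eh1; apply: lexlt_catr.
  rewrite /= -(IHB _ HNFu) (ins_cat _ Fh1) /=.
  by rewrite (negbTE (le_nlt Hle12)).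
split=> // g; rewrite Hfw inE => /orP[/eqP->|Hg]; last first.
  by apply: IHA; rewrite EF mem_cat Hg orbT.
case: F2 EF I1 I2 Hfw First => [|f F2'] EF I1 I2 Hfw First; last exact: First.
rewrite cats0 in EF; rewrite -EF fact_flatten.
apply/NyldonE; case: (posnP (size u)) => Hu0; [by left; rewrite /= Hu0|right; split=> //].
move=> [gs [Hgs Ha Hf Hn Hs]].
have E : gs = fact (c :: u) by apply: B; split=> //; apply: all_Nyldon_ne.
by move: Hgs; rewrite E Hfw -EF fact_flatten.
Qed.

Lemma fact_Nyl w g : g \in fact w -> Nyldon g.
Proof. exact: (proj1 (fact_main (leqnn (size w)))). Qed.

Lemma fact_uniq w F : NF w F -> F = fact w.
Proof. exact: (proj2 (fact_main (leqnn (size w)))). Qed.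

Lemma Nyldon_fact w : Nyldon w -> fact w = [:: w].
Proof.
move=> H; symmetry; apply: fact_uniq; split=> //=.
- by rewrite andbT; apply: Nyldon_nonempty.
- by rewrite cats0.
- by move=> g; rewrite mem_seq1 => /eqP->.
Qed.

Lemma fact_Nyldon w : fact w = [:: w] -> Nyldon w.
Proof. by move=> H; apply: (@fact_Nyl w); rewrite H mem_seq1. Qed.

Lemma LS z s : Nyldon s -> size s <= size (last [::] (fact (z ++ s))).
Proof.
move=> Hs; elim: z => [|c z IH] /=; first by rewrite Nyldon_fact.
exact: (leq_trans IH (ins_last_size _ _)).
Qed.

Lemma Comb c p' s : Nyldon (c :: p') -> Nyldon s ->
  lexle (last [::] (fact p')) s -> lexlt s (c :: p') ->
  [/\ Nyldon (c :: p' ++ s), last [::] (fact (p' ++ s)) = s &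
      lnps_fact (c :: p' ++ s) (c :: p') s].
Proof.
move=> Hp Hs Hle Hlt.
have Hf : fact (p' ++ s) = fact p' ++ [:: s].
  symmetry; apply: fact_uniq; split.
  - apply: all_Nyldon_ne => g; rewrite mem_cat mem_seq1 => /orP[/fact_Nyl //|/eqP->//].
  - by rewrite flatten_cat fact_flatten /= cats0.
  - by move=> g; rewrite mem_cat mem_seq1 => /orP[/fact_Nyl //|/eqP->//].
  - by apply: sorted_catl => //; apply: fact_sorted.
have Hny : Nyldon (c :: p' ++ s).
  apply: fact_Nyldon; rewrite /= Hf.
  have := Nyldon_fact Hp; rewrite /= => E.
  by rewrite (ins_cat _ E) /= Hlt.
have Hl : last [::] (fact (p' ++ s)) = s by rewrite Hf last_cat.
split=> //; split=> //; split; first by exists (c :: p').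
split=> //.

move=> [|c0 p0] s' // _ [_ E] Hs'.
by have := LS p0 Hs'; rewrite -E Hl.
Qed.

Lemma compl_cat u v : compl (u ++ v) = compl u ++ compl v.
Proof. exact: map_cat. Qed.

Lemma compl_K u : compl (compl u) = u.
Proof. by rewrite /compl -map_comp map_id_in // => b _ /=; rewrite negbK. Qed.

Lemma TM_SS n : TM n.+2 = TM n ++ compl (TM n) ++ compl (TM n) ++ TM n.
Proof. by rewrite /= compl_cat compl_K -catA. Qed.

Lemma TM_head n : exists x0, TM n = la :: x0.
Proof. by elim: n => [|n [x0 IH]] /=; [exists [::]|rewrite IH; eexists]. Qed.

Lemma TM_even_last j : exists v, TM (2 * j) = v ++ [:: la].
Proof.
elim: j => [|j [v IH]]; first by exists [::].
have -> : 2 * j.+1 = (2 * j).+2 by rewrite mulnS.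
by rewrite TM_SS {4}IH !catA; eexists.
Qed.

Lemma TM_form j : 0 < j -> exists x0 w0,
  TM (2 * j) = la :: x0 /\ compl (TM (2 * j)) = (lb :: w0) ++ [:: lb].
Proof.
case: j => [|j] // _.
have -> : 2 * j.+1 = (2 * j).+2 by rewrite mulnS.
have [x1 h1] := TM_head (2 * j); have [v hv] := TM_even_last j.
rewrite TM_SS.
exists (x1 ++ compl (TM (2 * j)) ++ compl (TM (2 * j)) ++ TM (2 * j)),
  (compl x1 ++ TM (2 * j) ++ TM (2 * j) ++ compl v); split.
  by rewrite {1}h1.
by rewrite !compl_cat compl_K {1}h1 {3}hv compl_cat /= -!catA.
Qed.

Lemma dropl_rcons u c : dropl (u ++ [:: c]) = u.
Proof. by rewrite /dropl size_cat addn1 /= take_size_cat. Qed.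

Definition L3 j := last [::] (fact (behead (t3 j))).
Definition J j := Nyldon (t3 j) /\ Nyldon (t4 j) /\ Nyldon (t8 j) /\ Nyldon (t9 j) /\
  Nyldon (t10 j) /\ Nyldon (t12 j) /\
  lexle (L3 j) (t9 j) /\ lexle (L3 j) (t10 j) /\ lexle (L3 j) (t12 j) /\
      lexle (L3 j) (t4 j) /\ lexle (L3 j) (t8 j).

Definition Thm k :=
     lnps_fact (t1 k) (t3 k.-1) (t9 k.-1) /\
      lnps_fact (t2 k) (t3 k.-1) (t10 k.-1) /\
      lnps_fact (t3 k) (t3 k.-1) (t12 k.-1) /\
      lnps_fact (t4 k) (t3 k.-1) (t4 k.-1) /\
      lnps_fact (t5 k) (t3 k.-1) (t8 k.-1) /\
      lnps_fact (t6 k) (t5 k) (t9 k.-1) /\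
      lnps_fact (t7 k) (t5 k) (t10 k.-1) /\
      lnps_fact (t8 k) (t5 k) (t12 k.-1) /\
      lnps_fact (t9 k) (t1 k) (t6 k) /\
      lnps_fact (t10 k) (t1 k) (t7 k) /\
      lnps_fact (t11 k) (t8 k) (t6 k) /\
      lnps_fact (t12 k) (t1 k) (t11 k).

Ltac nrm := do 20 (try rewrite -!catA; try rewrite !cat_cons; try rewrite !cat0s).
Lemma lexlt_pre' u w : lexlt u (u ++ w) = (w != [::]).
Proof. by rewrite -{1}(cats0 u) lexlt_cat2; case: w. Qed.

Ltac cmp x w0 hx :=
  repeat (rewrite lexlt_cons || rewrite (lexlt_cat2 x) || rewrite (lexlt_cat2 w0)
          || rewrite (lexlt_pre' x) || rewrite (lexlt_pre' w0)); try rewrite hx; rewrite /=; done.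

Lemma step j : 0 < j -> J j -> Thm j.+1 /\ J j.+1.
Proof.
move=> j0 [N3 [N4 [N8 [N9 [N10 [N12 [C9 [C10 [C12 [C4 C8]]]]]]]]]].
have [x0 [w0 [hx hc]]] := TM_form j0.
have e0 : 2 * j.+1 = (2 * j).+2 by rewrite mulnS.
have e1 : 2 * j.+1 - 1 = (2 * j).+1 by lia.
have e2 : 2 * j.+1 - 2 = 2 * j by lia.
move: N3 N4 N8 N9 N10 N12 C9 C10 C12 C4 C8.
rewrite /Thm /J /L3 /t1 /t2 /t3 /t4 /t5 /t6 /t7 /t8 /t9 /t10 /t11 /t12 /tA /tB.
rewrite e1 e2 e0 TM_SS /= !compl_cat !compl_K hc !catA !dropl_rcons.
move: (TM (2 * j)) hx => x hx.
nrm.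
move=> N3 N4 N8 N9 N10 N12 C9 C10 C12 C4 C8.
have [Ny1 La1 F1] := Comb N3 N9 C9 ltac:(by cmp x w0 hx).
have [Ny2 La2 F2] := Comb N3 N10 C10 ltac:(by cmp x w0 hx).
have [Ny3 La3 F3] := Comb N3 N12 C12 ltac:(by cmp x w0 hx).
have [Ny4 La4 F4] := Comb N3 N4 C4 ltac:(by rewrite lexlt_cons lexlt_pre).
have [Ny5 La5 F5] := Comb N3 N8 C8 ltac:(by cmp x w0 hx).
move: Ny1 La1 F1 Ny2 La2 F2 Ny3 La3 F3 Ny4 La4 F4 Ny5 La5 F5; nrm.
move=> Ny1 La1 F1 Ny2 La2 F2 Ny3 La3 F3 Ny4 La4 F4 Ny5 La5 F5.
have [Ny6 La6 F6] := Comb Ny5 N9 ltac:(by rewrite La5; apply/orP; right; cmp x w0 hx)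
  ltac:(by cmp x w0 hx).
have [Ny7 La7 F7] := Comb Ny5 N10 ltac:(by rewrite La5; apply/orP; right; cmp x w0 hx)
  ltac:(by cmp x w0 hx).
have [Ny8 La8 F8] := Comb Ny5 N12 ltac:(by rewrite La5; apply/orP; right; cmp x w0 hx)
  ltac:(by cmp x w0 hx).
move: Ny6 La6 F6 Ny7 La7 F7 Ny8 La8 F8; nrm.
move=> Ny6 La6 F6 Ny7 La7 F7 Ny8 La8 F8.
have [Ny9 La9 F9] := Comb Ny1 Ny6 ltac:(by rewrite La1; apply/orP; right; cmp x w0 hx)
  ltac:(by cmp x w0 hx).
have [Ny10 La10 F10] := Comb Ny1 Ny7 ltac:(by rewrite La1; apply/orP; right; cmp x w0 hx)
  ltac:(by cmp x w0 hx).
have [Ny11 La11 F11] := Comb Ny8 Ny6 ltac:(by rewrite La8; apply/orP; right; cmp x w0 hx)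
  ltac:(by cmp x w0 hx).
move: Ny11 La11 F11; nrm; move=> Ny11 La11 F11.
have [Ny12 La12 F12] := Comb Ny1 Ny11 ltac:(by rewrite La1; apply/orP; right; cmp x w0 hx)
  ltac:(by cmp x w0 hx).
move: Ny9 La9 F9 Ny10 La10 F10 Ny12 La12 F12; nrm.
move=> Ny9 La9 F9 Ny10 La10 F10 Ny12 La12 F12.
nrm.
split.
  split; first exact F1.
  split; first exact F2.
  split; first exact F3.
  split; first exact F4.
  split; first exact F5.
  split; first exact F6.
  split; first exact F7.
  split; first exact F8.
  split; first exact F9.
  split; first exact F10.
  split; first exact F11.
  exact F12.
do 6 (split; first assumption).
rewrite La3.
by do 4 (split; first by apply/orP; right; cmp x w0 hx); apply/orP; right; cmp x w0 hx.
Qed.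

Lemma J1 : J 1.
Proof.
rewrite /J /L3.
do 6 (split; first by apply: fact_Nyldon; vm_compute).
by do 4 (split; first by vm_compute); vm_compute.
Qed.

Lemma Jall j : 0 < j -> J j.
Proof.
elim: j => [|j IH] // _.
case: j IH => [|j] IH; first exact: J1.
exact: (step (ltn0Sn j) (IH (ltn0Sn j))).2.
Qed.

Theorem mainTheorem9 (k : nat) : 2 <= k ->
     lnps_fact (t1 k) (t3 k.-1) (t9 k.-1) /\
      lnps_fact (t2 k) (t3 k.-1) (t10 k.-1) /\
      lnps_fact (t3 k) (t3 k.-1) (t12 k.-1) /\
      lnps_fact (t4 k) (t3 k.-1) (t4 k.-1) /\
      lnps_fact (t5 k) (t3 k.-1) (t8 k.-1) /\
      lnps_fact (t6 k) (t5 k) (t9 k.-1) /\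
      lnps_fact (t7 k) (t5 k) (t10 k.-1) /\
      lnps_fact (t8 k) (t5 k) (t12 k.-1) /\
      lnps_fact (t9 k) (t1 k) (t6 k) /\
      lnps_fact (t10 k) (t1 k) (t7 k) /\
      lnps_fact (t11 k) (t8 k) (t6 k) /\
      lnps_fact (t12 k) (t1 k) (t11 k).
Proof.
case: k => [|[|j]] // _.
exact: (step (ltn0Sn j) (Jall (ltn0Sn j))).1.
Qed.
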